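(* Let $\Delta$ be a simplicial polytopal fan in $\mathbb{R}^d$ with ray generators $\mathbf{v}_1,\ldots,\mathbf{v}_n$ and let $m\ge1$. Let $\Delta^m$ be the polyhedral fan in $\mathbb{R}^{m\times d}$ whose cells are the products $\sigma_1\times\cdots\times\sigma_m$ with $\sigma_j\in\Delta$, and let $\Upsilon$ be the collection of all closed cones $\overline{U_G}$, $G\in\mathcal{G}$, such that $G$ has no matching of size $n$. Then $\Upsilon$ is strictly contained in $\Delta^m$ if and only if $m\ge n$.
   Context: A fan is simplicial if every cone is generated by linearly independent vectors; polytopal if it is the normal fan of a polytope. For $\mathbf{u}\in\mathbb{R}^d$, with $\sigma$ the cone of $\Delta$ containing $\mathbf{u}$ in its relative interior and $\mathbf{u}=\sum_{k\in I_\sigma}\lambda_k\mathbf{v}_k$ over the generators of $\sigma$, set $[\mathbf{u}]_i=\lambda_i$ for $i\in I_\sigma$ and $0$ otherwise. For $U\in\mathbb{R}^{m\times d}$ with rows $\mathbf{u}^{(1)},\ldots,\mathbf{u}^{(m)}$, $G_U$ is the bipartite graph on $[n]\sqcup[m]$ with $i\in[n]$ adjacent to $j\in[m]$ iff $[\mathbf{u}^{(j)}]_i>0$. $\mathcal{G}$ is the set of graphs of the form $G_U$, and for $G\in\mathcal{G}$, $U_G=\{U\in\mathbb{R}^{m\times d}\colon G_U=G\}$; the closures $\overline{U_G}$ are exactly the cells of $\Delta^m$. *)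

(* Defs.v *)
From HB Require Import structures.
From mathcomp Require Import all_boot all_order all_algebra.
From mathcomp Require Import boolp classical_sets reals topology normedtype.
Import numFieldNormedType.Exports.
Set Implicit Arguments. Unset Strict Implicit. Unset Printing Implicit Defensive.
Import Order.TTheory GRing.Theory Num.Theory.
Local Open Scope ring_scope.
Local Open Scope classical_set_scope.

Section Fans.
Variables (R : realType) (d n : nat).

Definition dotp (x y : 'rV[R]_d) : R := \sum_(k < d) x 0 k * y 0 k.

Definition cone_gen (v : 'I_n -> 'rV[R]_d) (S : {set 'I_n}) : set 'rV[R]_d :=
  [set u | exists lam : 'I_n -> R,
     (forall k, 0 <= lam k) /\ u = \sum_(k in S) lam k *: v k].

Definition fan_cones (v : 'I_n -> 'rV[R]_d) (cones : {set {set 'I_n}})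
  : set (set 'rV[R]_d) :=
  [set K | exists2 S, S \in cones & K = cone_gen v S].

Definition simplicial (v : 'I_n -> 'rV[R]_d) (cones : {set {set 'I_n}}) :=
  forall S, S \in cones -> forall lam : 'I_n -> R,
    \sum_(k in S) lam k *: v k = 0 -> forall k, k \in S -> lam k = 0.

Definition ray_generators (v : 'I_n -> 'rV[R]_d) (cones : {set {set 'I_n}}) :=
  (forall i, [set i]%SET \in cones) /\
  (forall i j, cone_gen v [set i]%SET = cone_gen v [set j]%SET -> i = j).

(* Polytope P = conv(pts).  For a linear functional c, argmax_pts c is the set
   of (indices of) points of pts maximizing c; the face of P maximizing c is
   their convex hull. The normal cone of the face F_c0 is
   { c | F_c0 is contained in F_c }. *)
Definition argmax_pts (k : nat) (pts : 'I_k -> 'rV[R]_d) (c : 'rV[R]_d) :=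
  [set i : 'I_k | forall j, dotp c (pts j) <= dotp c (pts i)].

Definition normal_cone (k : nat) (pts : 'I_k -> 'rV[R]_d) (c0 : 'rV[R]_d) :=
  [set c | argmax_pts pts c0 `<=` argmax_pts pts c].

Definition normal_fan (k : nat) (pts : 'I_k -> 'rV[R]_d) : set (set 'rV[R]_d) :=
  [set K | exists c0, K = normal_cone pts c0].

Definition polytopal (v : 'I_n -> 'rV[R]_d) (cones : {set {set 'I_n}}) :=
  exists (k : nat) (pts : 'I_k -> 'rV[R]_d),
    (0 < k)%N /\ fan_cones v cones = normal_fan pts.

Definition aff_hull (K : set 'rV[R]_d) : set 'rV[R]_d :=
  [set w | exists (k : nat) (c : 'I_k -> R) (x : 'I_k -> 'rV[R]_d),
     (forall i, K (x i)) /\ \sum_i c i = 1 /\ w = \sum_i c i *: x i].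

Definition relint (K : set 'rV[R]_d) : set 'rV[R]_d :=
  [set u | K u /\ exists A : set 'rV[R]_d, open A /\ A u /\
                    A `&` aff_hull K `<=` K].

Definition coord_rel (v : 'I_n -> 'rV[R]_d) (cones : {set {set 'I_n}})
    (u : 'rV[R]_d) (lam : 'I_n -> R) :=
  exists2 S, S \in cones &
    [/\ relint (cone_gen v S) u, (forall k, k \notin S -> lam k = 0)
      & u = \sum_(k in S) lam k *: v k].

Definition coord (v : 'I_n -> 'rV[R]_d) (cones : {set {set 'I_n}})
    (u : 'rV[R]_d) (i : 'I_n) : R :=
  match pselect (exists lam, coord_rel v cones u lam) with
  | left h => projT1 (cid h) i
  | right _ => 0
  end.

Variable m : nat.

Definition graphU (v : 'I_n -> 'rV[R]_d) (cones : {set {set 'I_n}})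
    (U : 'M[R]_(m, d)) : {set 'I_n * 'I_m} :=
  [set ij | 0 < coord v cones (row ij.2 U) ij.1].

Definition graphsG (v : 'I_n -> 'rV[R]_d) (cones : {set {set 'I_n}}) : set {set 'I_n * 'I_m} :=
  [set G | exists U, graphU v cones U = G].

Definition UG (v : 'I_n -> 'rV[R]_d) (cones : {set {set 'I_n}}) (G : {set 'I_n * 'I_m}) : set 'M[R]_(m, d) :=
  [set U | graphU v cones U = G].

Definition has_matching (G : {set 'I_n * 'I_m}) (s : nat) :=
  exists M : {set 'I_n * 'I_m}, [/\ M \subset G, #|M| = s &
    forall e1 e2, e1 \in M -> e2 \in M -> e1 != e2 ->
      e1.1 != e2.1 /\ e1.2 != e2.2].

Definition prod_fan (v : 'I_n -> 'rV[R]_d) (cones : {set {set 'I_n}}) : set (set 'M[R]_(m, d)) :=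
  [set C | exists sig : 'I_m -> {set 'I_n}, (forall j, sig j \in cones) /\
     C = [set U | forall j, cone_gen v (sig j) (row j U)]].

Definition Upsilon (v : 'I_n -> 'rV[R]_d) (cones : {set {set 'I_n}}) : set (set 'M[R]_(m, d)) :=
  [set C | exists2 G, graphsG v cones G /\ ~ has_matching G n &
     C = closure (UG v cones G)].

End Fans.

(* Main.v *)
Require Import Defs.
From HB Require Import structures.
From mathcomp Require Import all_boot all_order all_algebra.
From mathcomp Require Import boolp classical_sets reals topology normedtype.
From mathcomp.algebra_tactics Require Import ring lra.
Import numFieldNormedType.Exports.
Import Order.TTheory GRing.Theory Num.Theory.
Local Open Scope ring_scope.
Local Open Scope classical_set_scope.
Set Implicit Arguments. Unset Strict Implicit. Unset Printing Implicit Defensive.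



Section Basic.
Variables (R : realType) (d : nat).

Lemma mx_entry_le (a b : nat) (M : 'M[R]_(a, b)) i j : `|M i j| <= `|M|.
Proof.
rewrite [leRHS]/Num.Def.normr /= mx_normrE; apply/bigmax_geP; right => /=.
by exists (i, j).
Qed.

Lemma row_norm_le (a : nat) (M : 'M[R]_(a, d)) j : `|row j M| <= `|M|.
Proof.
rewrite [leLHS]/Num.Def.normr /= mx_normrE; apply: bigmax_le => //= -[x l] _.
by rewrite mxE; apply: mx_entry_le.
Qed.

Lemma dotpDl (x y p : 'rV[R]_d) : dotp (x + y) p = dotp x p + dotp y p.
Proof. by rewrite /dotp -big_split; apply: eq_bigr => k _; rewrite mxE mulrDl. Qed.

Lemma dotpZl a (x p : 'rV[R]_d) : dotp (a *: x) p = a * dotp x p.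
Proof. by rewrite /dotp mulr_sumr; apply: eq_bigr => k _; rewrite mxE mulrA. Qed.

Lemma dotpNl (x p : 'rV[R]_d) : dotp (- x) p = - dotp x p.
Proof. by rewrite -scaleN1r dotpZl mulN1r. Qed.

Lemma dotpBl (x y p : 'rV[R]_d) : dotp (x - y) p = dotp x p - dotp y p.
Proof. by rewrite dotpDl dotpNl. Qed.

Lemma dotpBr (x p q : 'rV[R]_d) : dotp x (p - q) = dotp x p - dotp x q.
Proof. by rewrite /dotp -sumrB; apply: eq_bigr => k _; rewrite !mxE mulrBr. Qed.

Lemma dotp0l (p : 'rV[R]_d) : dotp 0 p = 0.
Proof. by rewrite /dotp big1 // => k _; rewrite mxE mul0r. Qed.

Lemma dotp_suml (I : finType) (P : pred I) (c : I -> R) (x : I -> 'rV[R]_d) p :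
  dotp (\sum_(i | P i) c i *: x i) p = \sum_(i | P i) c i * dotp (x i) p.
Proof.
elim/big_rec2: _ => [|i y1 y2 _ IH]; first exact: dotp0l.
by rewrite dotpDl dotpZl IH.
Qed.

Lemma dotp_bound (x p : 'rV[R]_d) : `|dotp x p| <= `|x| * \sum_k `|p 0 k|.
Proof.
rewrite /dotp mulr_sumr; apply: le_trans (ler_norm_sum _ _ _) _.
apply: ler_sum => k _; rewrite normrM ler_wpM2r //; exact: mx_entry_le.
Qed.

Lemma near_pos_lin (a b : nat) (g : 'M[R]_(a, b) -> R) K (c : 'M[R]_(a, b)) :
  (forall x y, g (x - y) = g x - g y) -> (forall x, `|g x| <= `|x| * K) ->
  0 < g c -> \forall y \near c, 0 < g y.
Proof.
move=> gB gK gc; apply/nbhs_normP.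
have K1 : 0 < `|K| + 1 by rewrite ltr_wpDl.
exists (g c / (`|K| + 1)); first by rewrite /= divr_gt0.
move=> y /= hy.
have e1 : g y = g c - g (c - y) by rewrite gB opprB addrC subrK.
rewrite e1 subr_gt0.
apply: le_lt_trans (ler_norm _) _; apply: le_lt_trans (gK _) _.
apply: le_lt_trans (_ : `|c - y| * (`|K| + 1) < g c).
  by rewrite ler_wpM2l // (le_trans (ler_norm K)) // lerDl.
by rewrite -ltr_pdivlMr.
Qed.

Lemma open_small (a b : nat) (A : set 'M[R]_(a, b)) x w :
  open A -> A x -> exists2 t : R, 0 < t & A (x + t *: w).
Proof.
rewrite openE => oA Ax; have := oA _ Ax; rewrite /interior => /nbhs_normP [e e0 He].
have w1 : 0 < `|w| + 1 by rewrite ltr_wpDl.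
exists (e / (`|w| + 1)); first by rewrite /= divr_gt0.
apply: He; rewrite /= opprD addNKr normrN normrZ gtr0_norm ?divr_gt0 //.
rewrite mulrAC ltr_pdivrMr // ltr_pM2l // ltrDl ltr01 //.
Qed.

End Basic.



Section Cones.
Variables (R : realType) (d n : nat) (v : 'I_n -> 'rV[R]_d) (cones : {set {set 'I_n}}).

Lemma cone_pt (S : {set 'I_n}) (lam : 'I_n -> R) :
  (forall k, k \in S -> 0 <= lam k) -> cone_gen v S (\sum_(k in S) lam k *: v k).
Proof.
move=> h; exists (fun k => if k \in S then lam k else 0); split.
  by move=> k; case: ifP => // /h.
by apply: eq_bigr => k ->.
Qed.

Lemma sum_delta (S : {set 'I_n}) k : k \in S ->
  \sum_(s in S) (s == k)%:R *: v s = v k.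
Proof.
move=> kS; rewrite (bigD1 k) //= eqxx scale1r big1 ?addr0 // => s /andP[_ /negbTE ->].
by rewrite scale0r.
Qed.

Lemma cone_gen_v (S : {set 'I_n}) k : k \in S -> cone_gen v S (v k).
Proof.
move=> kS; rewrite -(sum_delta kS); apply: cone_pt => s _; exact: ler0n.
Qed.

Lemma cone_gen0 (S : {set 'I_n}) : cone_gen v S 0.
Proof. by exists (fun _ => 0); split => // ; rewrite big1 // => k _; rewrite scale0r. Qed.

Lemma uniq_coef (S : {set 'I_n}) (a b : 'I_n -> R) :
  simplicial v cones -> S \in cones ->
  \sum_(k in S) a k *: v k = \sum_(k in S) b k *: v k -> forall k, k \in S -> a k = b k.
Proof.
move=> hs Sc e k kS; apply/eqP; rewrite -subr_eq0; apply/eqP.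
apply: (hs S Sc (fun k => a k - b k)) => //.
under eq_bigr do rewrite scalerBl.
by rewrite sumrB e subrr.
Qed.

Lemma v_neq0 i : simplicial v cones -> ray_generators v cones -> v i != 0.
Proof.
move=> hs [h1 _]; apply/eqP => vi0.
have := hs _ (h1 i) (fun _ => 1); rewrite big_set1 scale1r => /(_ vi0 i).
by move=> /(_ (set11 i)) /eqP; rewrite oner_eq0.
Qed.

Lemma cone1 i y : cone_gen v [set i]%SET y <-> exists2 t, 0 <= t & y = t *: v i.
Proof.
split.
  by case=> lam [l0 ->]; rewrite big_set1; exists (lam i).
case=> t t0 ->; exists (fun _ => t); split => //; by rewrite big_set1.
Qed.

Lemma cone_det_sub (S S' : {set 'I_n}) :
  simplicial v cones -> ray_generators v cones -> S \in cones -> S' \in cones ->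
  cone_gen v S = cone_gen v S' -> (S \subset S')%SET.
Proof.
move=> hs hr Sc S'c E; apply/fintype.subsetP => k kS.
have : cone_gen v S' (v k) by rewrite -E; exact: cone_gen_v.
case=> mu [mu0 hmu].
have : forall l, exists nu : 'I_n -> R, l \in S' ->
    (forall s, 0 <= nu s) /\ v l = \sum_(s in S) nu s *: v s.
  move=> l; case: (boolP (l \in S')) => lS'; last by exists (fun _ => 0).
  have : cone_gen v S (v l) by rewrite E; exact: cone_gen_v.
  by case=> nu hnu; exists nu.
case/choice => nu Hnu.
pose coef s := \sum_(l in S') mu l * nu l s.
have vk_eq : \sum_(s in S) (s == k)%:R *: v s = \sum_(s in S) coef s *: v s.
  rewrite sum_delta // hmu.
  transitivity (\sum_(l in S') \sum_(s in S) (mu l * nu l s) *: v s).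
    apply: eq_bigr => l lS'; rewrite (proj2 (Hnu l lS')) scaler_sumr.
    by apply: eq_bigr => s _; rewrite scalerA.
  rewrite exchange_big; apply: eq_bigr => s _; by rewrite scaler_suml.
have hc := uniq_coef hs Sc vk_eq.
have [l lS' mul0] : exists2 l, l \in S' & mu l != 0.
  apply/exists_inP; apply: contraT; rewrite negb_exists_in => /forall_inP h.
  have := v_neq0 k hs hr; rewrite hmu big1 ?eqxx // => l /h /negPn /eqP ->.
  by rewrite scale0r.
have nuls : forall s, s \in S -> s != k -> nu l s = 0.
  move=> s sS sk; have := hc s sS; rewrite (negbTE sk) /= => /esym c0.
  have := @psumr_eq0P _ _ (fun l => l \in S') (fun l => mu l * nu l s) _ c0 l lS'.
  move=> /(_ (fun l' l'S => mulr_ge0 (mu0 l') (proj1 (Hnu l' l'S) s))) /eqP.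
  by rewrite mulf_eq0 (negbTE mul0) /= => /eqP.
have vl : v l = nu l k *: v k.
  rewrite (proj2 (Hnu l lS')) (bigD1 k) //= big1 ?addr0 // => s /andP[sS sk].
  by rewrite nuls // scale0r.
have nupos : 0 < nu l k.
  rewrite lt_def (proj1 (Hnu l lS') k) andbT; apply: contraNneq (v_neq0 l hs hr).
  by move=> nu0; rewrite vl nu0 scale0r.
have -> : k = l; last by [].
apply: (proj2 hr); rewrite eqEsubset; split => y /cone1 [t t0 ->]; apply/cone1.
  exists (t / nu l k); first by rewrite divr_ge0 // ltW.
  by rewrite vl scalerA divfK // gt_eqF.
by exists (t * nu l k); [rewrite mulr_ge0 // ltW | rewrite vl scalerA].
Qed.

Lemma cone_det (S S' : {set 'I_n}) :
  simplicial v cones -> ray_generators v cones -> S \in cones -> S' \in cones ->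
  cone_gen v S = cone_gen v S' -> S = S'.
Proof.
move=> hs hr Sc S'c E; apply/eqP; rewrite finset.eqEsubset.
by rewrite !(cone_det_sub hs hr) //.
Qed.

End Cones.



Section Normal.
Variables (R : realType) (d k : nat) (pts : 'I_k -> 'rV[R]_d).
Hypothesis k0 : (0 < k)%N.

Lemma argmax_ex c : exists f, argmax_pts pts c f.
Proof.
pose i0 := Ordinal k0.
exists (Order.arg_max i0 xpredT (fun i => dotp c (pts i))) => j.
by case: (@arg_maxP _ _ _ i0 xpredT (fun i => dotp c (pts i)) isT) => i _ /(_ j isT).
Qed.

Lemma not_argmax c j : ~ argmax_pts pts c j ->
  exists i, dotp c (pts j) < dotp c (pts i).
Proof.
apply: contra_notP => H i; rewrite leNgt; apply/negP => hi; apply: H; by exists i.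
Qed.

Lemma aff2 (K : set 'rV[R]_d) x y s : K x -> K y ->
  aff_hull K ((1 - s) *: x + s *: y).
Proof.
move=> Kx Ky; exists 2%N, (fun i : 'I_2 => if i == ord0 then 1 - s else s),
  (fun i : 'I_2 => if i == ord0 then x else y); split; first by move=> i; case: ifP.
rewrite !big_ord_recr !big_ord0 /= !add0r; split => //; by rewrite subrK.
Qed.

Lemma aff_dot0 (K : set 'rV[R]_d) p y :
  (forall x, K x -> dotp x p = 0) -> aff_hull K y -> dotp y p = 0.
Proof.
move=> h [l [c [x [Kx [_ ->]]]]]; rewrite dotp_suml big1 // => i _.
by rewrite h // mulr0.
Qed.

Lemma relint_self c : relint (normal_cone pts c) c.
Proof.
have [f0 hf0] := argmax_ex c.
split; first by [].
pose B := [set y | forall j, ~ argmax_pts pts c j -> dotp y (pts j) < dotp y (pts f0)].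
exists (interior B); split; first exact: open_interior.
split.
  rewrite /interior.
  suff H : forall j, \forall y \near c, (~ argmax_pts pts c j -> dotp y (pts j) < dotp y (pts f0)).
    have HH := filter_forall _ H.
    have HH2 := HH (nbhs_filter c).
    by apply: filterS HH2 => y hy.
  move=> j.
  case: (pselect (argmax_pts pts c j)) => hj.
    by near=> y; move/(_ hj).
    Unshelve. all: end_near.
  have [i hi] := not_argmax hj.
  have hpos : 0 < dotp c (pts f0 - pts j).
    by rewrite dotpBr subr_gt0; apply: lt_le_trans hi (hf0 i).
  apply: filterS (near_pos_lin (g := fun y => dotp y (pts f0 - pts j))
     (K := \sum_l `|(pts f0 - pts j) 0 l|) _ _ hpos).
  - by move=> y; rewrite dotpBr subr_gt0 => h _.
  - by move=> x y /=; rewrite dotpBl.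
  - by move=> x; apply: dotp_bound.
move=> y [/interior_subset By Ay] f hf j.
have eqf : forall f', argmax_pts pts c f' -> dotp y (pts f') = dotp y (pts f).
  move=> f' hf'; apply/eqP; rewrite -subr_eq0 -dotpBr; apply/eqP.
  apply: (aff_dot0 _ Ay) => x Nx; rewrite dotpBr; apply/eqP; rewrite subr_eq0.
  by rewrite eq_le (Nx _ hf' f) (Nx _ hf f').
case: (pselect (argmax_pts pts c j)) => hj; first by rewrite eqf.
by rewrite -(eqf _ hf0); apply/ltW/By.
Qed.

Lemma relint_argmax c0 u : relint (normal_cone pts c0) u ->
  argmax_pts pts u = argmax_pts pts c0.
Proof.
move=> [Nu [A [oA [Au sub]]]].
rewrite eqEsubset; split; last exact: Nu.
move=> j hj; case: (pselect (argmax_pts pts c0 j)) => // nj; exfalso.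
have [f0 hf0] := argmax_ex c0.
have [i hi] := not_argmax nj.
have hlt : dotp c0 (pts j) < dotp c0 (pts f0) by apply: lt_le_trans hi (hf0 i).
have [t t0 At] := open_small (u - c0) oA Au.
have Ny : normal_cone pts c0 (u + t *: (u - c0)).
  apply: sub; split => //.
  have -> : u + t *: (u - c0) = (1 - - t) *: u + (- t) *: c0.
    by rewrite scalerBr scalerBl scale1r scaleNr opprK scaleNr addrA.
  by apply: aff2 => //.
have := Ny f0 hf0 j; rewrite !dotpDl !dotpZl !dotpBl.
have : dotp u (pts j) = dotp u (pts f0) by apply/eqP; rewrite eq_le hj (Nu _ hf0 j).
move=> ->.
move: hlt t0; set a := dotp c0 (pts j); set b := dotp c0 (pts f0); set X := dotp u (pts f0).
move=> hlt t0 h.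
nra.
Qed.

End Normal.



Section Fan.
Variables (R : realType) (d n : nat) (v : 'I_n -> 'rV[R]_d) (cones : {set {set 'I_n}}).
Variables (k : nat) (pts : 'I_k -> 'rV[R]_d).
Hypothesis hs : simplicial v cones.
Hypothesis hr : ray_generators v cones.
Hypothesis k0 : (0 < k)%N.
Hypothesis hfan : fan_cones v cones = normal_fan pts.

Lemma cone_normal S : S \in cones -> exists c0, cone_gen v S = normal_cone pts c0.
Proof.
move=> Sc; have : fan_cones v cones (cone_gen v S) by exists S.
by rewrite hfan => -[c0 ->]; exists c0.
Qed.

Lemma normal_cone_eq c0 u : argmax_pts pts u = argmax_pts pts c0 ->
  normal_cone pts u = normal_cone pts c0.
Proof. by rewrite /normal_cone => ->. Qed.

Lemma relint_cone S u : S \in cones ->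
  relint (cone_gen v S) u <-> cone_gen v S = normal_cone pts u.
Proof.
move=> Sc; have [c0 E] := cone_normal Sc; rewrite E; split.
  by move=> /relint_argmax H; rewrite (normal_cone_eq (H k0)).
by move=> ->; apply: relint_self.
Qed.

Lemma complete u : exists2 S, S \in cones & cone_gen v S = normal_cone pts u.
Proof.
have : normal_fan pts (normal_cone pts u) by exists u.
by rewrite -hfan => -[S Sc E]; exists S.
Qed.

Lemma supp_uniq S S' u : S \in cones -> S' \in cones ->
  relint (cone_gen v S) u -> relint (cone_gen v S') u -> S = S'.
Proof.
move=> Sc S'c /(relint_cone _ Sc) E /(relint_cone _ S'c) E'.
by apply: (cone_det hs hr Sc S'c); rewrite E E'.
Qed.

Lemma relint_pos S u : S \in cones -> relint (cone_gen v S) u ->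
  exists lam : 'I_n -> R, (forall i, i \in S -> 0 < lam i) /\ u = \sum_(i in S) lam i *: v i.
Proof.
move=> Sc [[lam [l0 eu]] [A [oA [Au sub]]]].
exists lam; split => // i iS; rewrite lt_def l0 andbT; apply/negP => /eqP li0.
have [t t0 At] := open_small (- v i) oA Au.
have Cp : cone_gen v S (u + t *: v i).
  rewrite eu -(sum_delta v iS) scaler_sumr -big_split /=.
  exists (fun s => lam s + t * (s == i)%:R); split.
    by move=> s; rewrite addr_ge0 // mulr_ge0 // ltW.
  by apply: eq_bigr => s _; rewrite scalerDl scalerA.
have Cm : cone_gen v S (u + t *: - v i).
  apply: sub; split => //.
  have -> : u + t *: - v i = (1 - - 1) *: u + (- 1) *: (u + t *: v i).
    by rewrite opprK scalerDl scale1r scaleN1r opprD addrA addrK scalerN.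
  apply: aff2 Cp; rewrite eu; exact: cone_pt (fun s _ => l0 s).
case: Cm => mu [mu0 emu].
have e2 : \sum_(s in S) mu s *: v s = \sum_(s in S) (lam s - t * (s == i)%:R) *: v s.
  rewrite -emu eu scalerN -(sum_delta v iS) scaler_sumr -sumrN -big_split /=.
  by apply: eq_bigr => s _; rewrite scalerBl scalerA.
have := uniq_coef hs Sc e2 iS; rewrite eqxx li0 mulr1 sub0r => mui.
by have := mu0 i; rewrite mui oppr_ge0 leNgt t0.
Qed.

Lemma pos_relint S (lam : 'I_n -> R) : S \in cones -> (forall i, i \in S -> 0 < lam i) ->
  relint (cone_gen v S) (\sum_(i in S) lam i *: v i).
Proof.
move=> Sc lp; set u := \sum_(i in S) lam i *: v i.
have [c0 E] := cone_normal Sc.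
apply/(relint_cone _ Sc); rewrite E; apply/esym/normal_cone_eq.
have Nu : normal_cone pts c0 u by rewrite -E; apply: cone_pt => i /lp /ltW.
rewrite eqEsubset; split; last exact: Nu.
move=> j hj; have [f0 hf0] := argmax_ex pts k0 c0.
have hu : dotp u (pts f0 - pts j) = 0.
  by rewrite dotpBr; apply/eqP; rewrite subr_eq0 eq_le (Nu _ hf0 j) hj.
have Dge : forall s, s \in S -> 0 <= dotp (v s) (pts f0 - pts j).
  move=> s sS; have : normal_cone pts c0 (v s) by rewrite -E; exact: cone_gen_v.
  by move=> /(_ f0 hf0 j); rewrite dotpBr subr_ge0.
have D0 : forall s, s \in S -> dotp (v s) (pts f0 - pts j) = 0.
  move=> s sS; move: hu; rewrite /u dotp_suml => hu.
  have := @psumr_eq0P _ _ (fun s => s \in S) (fun s => lam s * dotp (v s) (pts f0 - pts j)) _ hu s sS.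
  move=> /(_ (fun s' s'S => mulr_ge0 (ltW (lp s' s'S)) (Dge s' s'S))) /eqP.
  by rewrite mulf_eq0 gt_eqF ?lp //= => /eqP.
have : normal_cone pts c0 c0 by [].
rewrite -E => -[mu [mu0 ec0]].
have : dotp c0 (pts f0 - pts j) = 0.
  by rewrite ec0 dotp_suml big1 // => s sS; rewrite D0 // mulr0.
rewrite dotpBr => /eqP; rewrite subr_eq0 => /eqP e i.
by rewrite -e; exact: hf0.
Qed.

Lemma coord_char u : exists2 S, S \in cones &
  relint (cone_gen v S) u /\ forall i, (0 < Defs.coord v cones u i) = (i \in S).
Proof.
have [S Sc E] := complete u.
have rS : relint (cone_gen v S) u by apply/(relint_cone _ Sc).
have [lam [lp eu]] := relint_pos Sc rS.
exists S => //; split => // i.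
rewrite /Defs.coord; case: pselect => [h|h]; last first.
  exfalso; apply: h; exists (fun i => if i \in S then lam i else 0).
  exists S => //; split => //; first by move=> i' /negbTE ->.
  by rewrite eu; apply: eq_bigr => s ->.
case: (cid h) => mu [S' S'c [rS' mu0 emu]] /=.
have SS' := supp_uniq Sc S'c rS rS'; subst S'.
have e2 : \sum_(s in S) mu s *: v s = \sum_(s in S) lam s *: v s by rewrite -emu -eu.
case: (boolP (i \in S)) => iS.
  by rewrite (uniq_coef hs Sc e2 iS) lp.
by rewrite mu0 // ltxx.
Qed.

Variable m : nat.

Definition nbr (G : {set 'I_n * 'I_m}) (j : 'I_m) : {set 'I_n} := [set i | (i, j) \in G].

Lemma graph_nbr (U : 'M[R]_(m, d)) j :
  nbr (graphU v cones U) j \in cones /\ relint (cone_gen v (nbr (graphU v cones U) j)) (row j U).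
Proof.
have [S Sc [rS hS]] := coord_char (row j U).
suff -> : nbr (graphU v cones U) j = S by [].
by apply/setP => i; rewrite !inE /= hS.
Qed.

Lemma graph_of (U : 'M[R]_(m, d)) (sig : 'I_m -> {set 'I_n}) :
  (forall j, sig j \in cones /\ relint (cone_gen v (sig j)) (row j U)) ->
  graphU v cones U = [set ij | ij.1 \in sig ij.2]%SET.
Proof.
move=> h; apply/setP => -[i j]; rewrite !inE /=.
have [S Sc [rS hS]] := coord_char (row j U).
have [sc rs] := h j.
by rewrite hS (supp_uniq Sc sc rS rs).
Qed.

Lemma UG_eq G : graphsG v cones G ->
  (forall j, nbr G j \in cones) /\
  UG v cones G = [set U | forall j, relint (cone_gen v (nbr G j)) (row j U)].
Proof.
move=> [U0 <-]; split; first by move=> j; case: (graph_nbr U0 j).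
rewrite eqEsubset; split => U /=.
  by move=> <- j; case: (graph_nbr U j).
move=> h; rewrite /UG /= (@graph_of U (nbr (graphU v cones U0))).
  by apply/setP => -[i j]; rewrite !inE.
by move=> j; split => //; case: (graph_nbr U0 j).
Qed.

Lemma rowB' (X Y : 'M[R]_(m, d)) j : row j (X - Y) = row j X - row j Y.
Proof. by apply/rowP => l; rewrite !mxE. Qed.

Lemma rowDZ (X Y : 'M[R]_(m, d)) (t : R) j : row j (X + t *: Y) = row j X + t *: row j Y.
Proof. by apply/rowP => l; rewrite !mxE. Qed.

Lemma closure_cell (sig : 'I_m -> {set 'I_n}) : (forall j, sig j \in cones) ->
  closure [set U : 'M[R]_(m, d) | forall j, relint (cone_gen v (sig j)) (row j U)] =
  [set U | forall j, cone_gen v (sig j) (row j U)].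
Proof.
move=> hsig; rewrite eqEsubset; split => x.
  move=> cx j; have [c0 E] := cone_normal (hsig j); rewrite E => f hf a.
  rewrite leNgt; apply/negP => hlt.
  pose g := fun Y : 'M[R]_(m, d) => dotp (row j Y) (pts a - pts f).
  have gx : 0 < g x by rewrite /g dotpBr subr_gt0.
  have Kge : 0 <= \sum_l `|(pts a - pts f) 0 l| by apply: sumr_ge0 => l _.
  have gB : forall X Y, g (X - Y) = g X - g Y by move=> X Y'; rewrite /g rowB' dotpBl.
  have gK : forall X, `|g X| <= `|X| * \sum_l `|(pts a - pts f) 0 l|.
    move=> X; apply: le_trans (dotp_bound _ _) _.
    by rewrite ler_wpM2r // row_norm_le.
  have nb := near_pos_lin gB gK gx.
  have [Y [AY gY]] := cx _ nb.
  have := AY j => -[+ _]; rewrite E => /(_ f hf a) => hle.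
  by move: gY; rewrite /g dotpBr subr_gt0 ltNge hle.
move=> hx B nB.
pose W := \matrix_(j < m) (\sum_(s in sig j) v s).
have [t t0 hB] := open_small W (@open_interior _ B) nB.
exists (x + t *: W); split; last exact: interior_subset.
move=> j; have [lam [l0 e]] := hx j.
rewrite rowDZ rowK e scaler_sumr -big_split /=.
have -> : \sum_(i in sig j) (lam i *: v i + t *: v i) = \sum_(i in sig j) (lam i + t) *: v i.
  by apply: eq_bigr => i _; rewrite scalerDl.
apply: pos_relint => // i _; exact: ltr_wpDl.
Qed.

End Fan.



Lemma cells_eq (R : realType) (d n m : nat) (v : 'I_n -> 'rV[R]_d) (s1 s2 : 'I_m -> {set 'I_n}) :
  [set U : 'M[R]_(m, d) | forall j, cone_gen v (s1 j) (row j U)] =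
  [set U | forall j, cone_gen v (s2 j) (row j U)] ->
  forall j, cone_gen v (s1 j) `<=` cone_gen v (s2 j).
Proof.
move=> E j u hu.
pose Z := \matrix_(a < m) (if a == j then u else 0).
have : [set U : 'M[R]_(m, d) | forall j, cone_gen v (s1 j) (row j U)] Z.
  move=> a; rewrite rowK; case: eqP => [->|_] //; exact: cone_gen0.
by rewrite E => /(_ j); rewrite rowK eqxx.
Qed.

Theorem lemma3p11 (R : realType) (d n m : nat)
    (v : 'I_n -> 'rV[R]_d) (cones : {set {set 'I_n}}) :
  simplicial v cones -> polytopal v cones -> ray_generators v cones ->
  (1 <= m)%N ->
  (@Upsilon R d n m v cones `<` @prod_fan R d n m v cones <-> (n <= m)%N).
Proof.
move=> hs [k [pts [k0 hfan]]] hr m1.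
have UGe := @UG_eq R d n v cones k pts hs hr k0 hfan m.
have clc := @closure_cell R d n v cones k pts k0 hfan m.
have Usub : @Upsilon R d n m v cones `<=` @prod_fan R d n m v cones.
  move=> C [G [gG nm] ->]; have [hn hU] := UGe G gG.
  by rewrite hU clc //; exists (nbr G).
split.
  move=> [_ nsub]; case: (leqP n m) => // hlt; exfalso; apply: nsub.
  move=> C [sig [hsig ->]].
  pose W := \matrix_(j < m) (\sum_(s in sig j) v s).
  have hW : forall j, sig j \in cones /\ relint (cone_gen v (sig j)) (row j W).
    move=> j; split => //; rewrite rowK.
    have -> : \sum_(s in sig j) v s = \sum_(s in sig j) 1 *: v s.
      by apply: eq_bigr => s _; rewrite scale1r.
    by apply: (@pos_relint R d n v cones k pts k0 hfan (sig j) (fun _ => 1) (hsig j)).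
  have gW := @graph_of R d n v cones k pts hs hr k0 hfan m W sig hW.
  have gG : graphsG v cones (graphU v cones W) by exists W.
  have nG : nbr (graphU v cones W) = sig.
    by apply: funext => j; apply/setP => i; rewrite /nbr gW !inE.
  exists (graphU v cones W).
    split => // -[M [MG cM hM]].
    have : (#|[set e.2 | e in M]%SET| = #|M|)%N.
      apply: card_in_imset => e1 e2 h1 h2 e12; apply/eqP; apply: contraT => ne.
      by have := hM _ _ h1 h2 ne => -[_]; rewrite e12 eqxx.
    rewrite cM => ce; have := max_card [set e.2 | e in M]%SET; rewrite ce card_ord.
    by rewrite leqNgt hlt.
  by rewrite (proj2 (UGe _ gG)) nG clc.
move=> nm; split => // psub.
case: (posnP n) => [n0|n0].
  have [S Sc _] := @complete R d n v cones k pts hfan 0.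
  have : @prod_fan R d n m v cones [set U | forall j, cone_gen v S (row j U)].
    by exists (fun _ => S).
  move/psub => [G [_ nmG] _]; apply: nmG; exists (finset.set0 : {set 'I_n * 'I_m}); split.
  - exact: finset.sub0set.
  - by rewrite cards0 n0.
  - by move=> e1 e2; rewrite finset.in_set0.
pose i0 := Ordinal n0.
pose f (j : 'I_m) : 'I_n := insubd i0 (val j).
pose g (i : 'I_n) : 'I_m := widen_ord nm i.
have fg : forall i, f (g i) = i by move=> i; apply: val_inj; rewrite /f val_insubd /= ltn_ord.
pose sig j := [set f j]%SET.
have hsig : forall j, sig j \in cones := fun j => (proj1 hr) (f j).
have : @prod_fan R d n m v cones [set U | forall j, cone_gen v (sig j) (row j U)].
  by exists sig.
move/psub => [G [gG nmG] EC]; apply: nmG.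
have [hn hU] := UGe G gG; rewrite hU clc // in EC.
have nbrE : forall j, nbr G j = sig j.
  move=> j; apply: (cone_det hs hr (hn j) (hsig j)); rewrite eqEsubset; split.
    exact: cells_eq (esym EC) j.
  exact: cells_eq EC j.
exists [set (i, g i) | i in [set: 'I_n]]%SET; split.
- apply/fintype.subsetP => e /imsetP [i _ ->].
  have : i \in nbr G (g i) by rewrite nbrE /sig fg set11.
  by rewrite inE.
- rewrite card_imset ?cardsT ?card_ord //.
  by move=> i i' /(congr1 fst).
- move=> e1 e2 /imsetP [i1 _ ->] /imsetP [i2 _ ->] ne /=.
  have ni : i1 != i2 by apply: contraNneq ne => ->.
  split => //; apply: contraNneq ni => /(congr1 val) /= h; exact: val_inj.
Qed.
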